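(* There is an absolute constant $c>0$ such that the following holds. Let $\lambda>0$, $\delta\in(0,1)$, and assume $C_2<\infty$. Let $(\hat V,\hat\pi)$ be any SBEED output computed from the dataset $\mathcal D$ of size $n$. Writing $\iota=V_{\lambda,\max}^2\ln\frac{|\mathcal V||\mathcal P||\mathcal G|}{\delta}$, with probability at least $1-\delta$ over the draw of $\mathcal D$, $$J(\pi^\star)-J(\hat\pi)\le\frac{\lambda\ln|\mathcal A|}{1-\gamma}+\frac{c\sqrt{C_2}}{1-\gamma}\left(\sqrt{\epsilon_{\mathcal G,\mathcal V,\mathcal P}}+\sqrt{\epsilon_{\mathcal V,\mathcal P}}+\sqrt[4]{\frac{\iota}{n}\big(\epsilon_{\mathcal G,\mathcal V,\mathcal P}+\epsilon_{\mathcal V,\mathcal P}\big)}+\sqrt{\frac{\iota}{n}}\right).$$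
   Context: A finite MDP $(\mathcal S,\mathcal A,\gamma,P,R,d_0)$ with $\gamma\in[0,1)$, $P(\cdot\mid s,a)\in\Delta(\mathcal S)$, $R:\mathcal S\times\mathcal A\to[0,R_{\max}]$, $d_0\in\Delta(\mathcal S)$. For a policy $\pi$ and $\lambda\ge0$, $J_\lambda(\pi)=\mathbb E\big[\sum_{t\ge0}\gamma^t(R(s_t,a_t)-\lambda\ln\pi(a_t\mid s_t))\big]$ with $s_0\sim d_0$, $a_t\sim\pi(\cdot\mid s_t)$, $s_{t+1}\sim P(\cdot\mid s_t,a_t)$; $J=J_0$. $\pi^\star$ is a deterministic maximizer of $J$, $\pi^\star_\lambda$ the maximizer of $J_\lambda$. Occupancy $d^\pi(s)=(1-\gamma)\sum_t\gamma^t\Pr(s_t=s)$, $d^\pi(s,a)=d^\pi(s)\pi(a\mid s)$. $(\mathbb PV)(s,a)=\sum_{s'}P(s'\mid s,a)V(s')$; consistency operator $(\mathcal C^\pi_\lambda V)(s,a)=R(s,a)+\gamma(\mathbb PV)(s,a)-\lambda\ln\pi(a\mid s)$. Data distribution $\mu\in\Delta(\mathcal S\times\mathcal A)$, $\|f\|^2_{2,\mu}=\mathbb E_{\mu}[f(s,a)^2]$ (for $V$ depending only on $s$, $V-\mathcal C^\pi_\lambda V$ is the function $(s,a)\mapsto V(s)-(\mathcal C^\pi_\lambda V)(s,a)$). $V_{\lambda,\max}=(R_{\max}+\lambda\ln|\mathcal A|)/(1-\gamma)$. Finite function classes: $\mathcal V\subset[0,V_{\lambda,\max}]^{\mathcal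 S}$, $\mathcal P\subset\{\pi:\|\ln\pi\|_\infty\le V_{\lambda,\max}/\lambda\}$, $\mathcal G\subset[0,2V_{\lambda,\max}]^{\mathcal S\times\mathcal A}$. Dataset $\mathcal D=\{(s_i,a_i,r_i,s_i')\}_{i=1}^n$ with $(s_i,a_i)$ i.i.d. from $\mu$, $r_i=R(s_i,a_i)$, $s_i'\sim P(\cdot\mid s_i,a_i)$ independently. Empirical losses: $\mathscr L_{\mathcal D}(V;V,\pi)=\frac1n\sum_i\big(V(s_i)-r_i-\gamma V(s_i')+\lambda\ln\pi(a_i\mid s_i)\big)^2$ and $\mathscr R_{\mathcal D}(g;V,\pi)=\frac1n\sum_i\big(g(s_i,a_i)-r_i-\gamma V(s_i')+\lambda\ln\pi(a_i\mid s_i)\big)^2$. The SBEED output is $(\hat V,\hat\pi)\in\arg\min_{V\in\mathcal V,\pi\in\mathcal P}\max_{g\in\mathcal G}\big[\mathscr L_{\mathcal D}(V;V,\pi)-\mathscr R_{\mathcal D}(g;V,\pi)\big]$. Concentrability: $C_2=\max_{\pi\in\mathcal P\cup\{\pi^\star_\lambda\}}\|d^\pi/\mu\|^2_{2,\mu}$. Approximation errors: $\epsilon_{\mathcal V,\mathcal P}=\min_{V\in\mathcal V,\pi\in\mathcal P}\|V-\mathcal C^\pi_\lambda V\|^2_{2,\mu}$ and $\epsilon_{\mathcal G,\mathcal V,\mathcal P}=\max_{V\in\mathcal V,\pi\in\mathcal P}\min_{g\in\mathcal G}\|g-\mathcal C^\pi_\lambda V\|^2_{2,\mu}$. *)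

(* Defs.v *)
From HB Require Import structures.
From mathcomp Require Import all_boot all_order all_algebra.
From mathcomp Require Import all_classical all_reals all_analysis.
Set Implicit Arguments. Unset Strict Implicit. Unset Printing Implicit Defensive.
Import Order.TTheory GRing.Theory Num.Theory.
Local Open Scope ring_scope.

Section SBEED.
Variables (R : realType) (S A : finType).

(* policies / Q-like functions are curried finite functions S -> A -> R *)
Definition polT := {ffun S -> {ffun A -> R}}.
Definition valT := {ffun S -> R}.
Definition sample := (S * A * S)%type.
Definition dataset (n : nat) := {ffun 'I_n -> sample}.

Definition is_dist_S (d : S -> R) := (forall s, 0 <= d s) /\ \sum_s d s = 1.
Definition is_dist_A (d : A -> R) := (forall a, 0 <= d a) /\ \sum_a d a = 1.
Definition is_dist_SA (d : S -> A -> R) :=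
  (forall s a, 0 <= d s a) /\ \sum_s \sum_a d s a = 1.
Definition is_policy (pi : polT) := forall s, is_dist_A (pi s).
Definition is_kernel (P : S -> A -> S -> R) := forall s a, is_dist_S (P s a).
Definition is_deterministic (pi : polT) :=
  forall s, exists a0, forall a, pi s a = (a == a0)%:R.

Fixpoint state_dist (P : S -> A -> S -> R) (d0 : S -> R) (pi : polT) (t : nat)
  : S -> R :=
  match t with
  | 0 => d0
  | t'.+1 => fun s' => \sum_s \sum_a
      state_dist P d0 pi t' s * pi s a * P s a s'
  end.

(* J_lambda(pi) = E[sum_t gamma^t (R(s_t,a_t) - lambda ln pi(a_t|s_t))],
   written as the limit of the partial sums of the expected per-step terms *)
Definition J_lam (P : S -> A -> S -> R) (Rw : S -> A -> R) (d0 : S -> R)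
  (gamma lam : R) (pi : polT) : R :=
  limn (fun N => \sum_(t < N) gamma ^+ t *
     \sum_s \sum_a state_dist P d0 pi t s * pi s a * (Rw s a - lam * ln (pi s a))).

Definition J P Rw d0 gamma pi := J_lam P Rw d0 gamma 0 pi.

Definition occ_S P d0 (gamma : R) (pi : polT) (s : S) : R :=
  (1 - gamma) * limn (fun N => \sum_(t < N) gamma ^+ t * state_dist P d0 pi t s).
Definition occ P d0 gamma pi (s : S) (a : A) : R := occ_S P d0 gamma pi s * pi s a.

Definition PV (P : S -> A -> S -> R) (V : valT) (s : S) (a : A) : R :=
  \sum_s' P s a s' * V s'.
Definition cons_op P (Rw : S -> A -> R) (gamma lam : R) (pi : polT) (V : valT)
  (s : S) (a : A) : R := Rw s a + gamma * PV P V s a - lam * ln (pi s a).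

Definition sqnorm (mu : S -> A -> R) (f : S -> A -> R) : R :=
  \sum_s \sum_a mu s a * (f s a) ^+ 2.

Definition minl {T : Type} (d : T) (l : seq T) (f : T -> R) : R :=
  \big[Num.min/f (head d l)]_(x <- l) f x.
Definition maxl {T : Type} (d : T) (l : seq T) (f : T -> R) : R :=
  \big[Num.max/f (head d l)]_(x <- l) f x.

Definition V0 : valT := [ffun => 0].
Definition pol0 : polT := [ffun => [ffun => 0]].

Definition eps_VP P Rw mu gamma lam (Vs : seq valT) (Ps : seq polT) : R :=
  minl (V0, pol0) [seq (V, p) | V <- Vs, p <- Ps]
    (fun vp => sqnorm mu (fun s a => vp.1 s - cons_op P Rw gamma lam vp.2 vp.1 s a)).

Definition eps_GVP P Rw mu gamma lam (Vs : seq valT) (Ps : seq polT) (Gs : seq polT)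
  : R :=
  maxl (V0, pol0) [seq (V, p) | V <- Vs, p <- Ps]
    (fun vp => minl pol0 Gs
       (fun g => sqnorm mu (fun s a => g s a - cons_op P Rw gamma lam vp.2 vp.1 s a))).

(* concentrability: max over P u {pi*_lambda} of ||d^pi/mu||^2_{2,mu}
   (terms with mu(s,a) = 0 vanish; finiteness is a separate hypothesis) *)
Definition conc_term P d0 gamma (mu : S -> A -> R) (pi : polT) : R :=
  \sum_s \sum_a mu s a * (occ P d0 gamma pi s a / mu s a) ^+ 2.
Definition C2 P d0 gamma mu (Ps : seq polT) (pistar_lam : polT) : R :=
  maxl pol0 (pistar_lam :: Ps) (conc_term P d0 gamma mu).
Definition C2_finite P d0 gamma (mu : S -> A -> R) (Ps : seq polT) (pistar_lam : polT)
  : Prop :=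
  forall pi, pi \in pistar_lam :: Ps ->
    forall s a, mu s a = 0 -> occ P d0 gamma pi s a = 0.

Definition loss_L (Rw : S -> A -> R) (gamma lam : R) n (D : dataset n)
  (V : valT) (pi : polT) : R :=
  n%:R^-1 * \sum_(i < n)
    (V (D i).1.1 - Rw (D i).1.1 (D i).1.2 - gamma * V (D i).2
       + lam * ln (pi (D i).1.1 (D i).1.2)) ^+ 2.
Definition loss_R (Rw : S -> A -> R) (gamma lam : R) n (D : dataset n)
  (g : polT) (V : valT) (pi : polT) : R :=
  n%:R^-1 * \sum_(i < n)
    (g (D i).1.1 (D i).1.2 - Rw (D i).1.1 (D i).1.2 - gamma * V (D i).2
       + lam * ln (pi (D i).1.1 (D i).1.2)) ^+ 2.

Definition sbeed_obj Rw gamma lam n (D : dataset n) (Gs : seq polT)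
  (V : valT) (pi : polT) : R :=
  maxl pol0 Gs (fun g => loss_L Rw gamma lam D V pi - loss_R Rw gamma lam D g V pi).

Definition is_sbeed_output Rw gamma lam n (D : dataset n)
  (Vs : seq valT) (Ps : seq polT) (Gs : seq polT) (Vh : valT) (pih : polT) : Prop :=
  [/\ Vh \in Vs, pih \in Ps &
      forall V pi, V \in Vs -> pi \in Ps ->
        sbeed_obj Rw gamma lam D Gs Vh pih <= sbeed_obj Rw gamma lam D Gs V pi].

Definition data_prob (P : S -> A -> S -> R) (mu : S -> A -> R) n (D : dataset n) : R :=
  \prod_(i < n) (mu (D i).1.1 (D i).1.2 * P (D i).1.1 (D i).1.2 (D i).2).

Definition prob_event P mu n (E : dataset n -> Prop) : R :=
  \sum_(D : dataset n | `[< E D >]) data_prob P mu D.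

End SBEED.

(* Main.v *)
Require Import Defs.
From HB Require Import structures.
From mathcomp Require Import all_boot all_order all_algebra.
From mathcomp Require Import all_classical all_reals all_analysis.
From mathcomp Require Import ring lra zify.
Import Order.TTheory GRing.Theory Num.Theory.
Import numFieldNormedType.Exports.
Set Implicit Arguments. Unset Strict Implicit.
Local Open Scope classical_set_scope.
Local Open Scope ring_scope.
Section Lim.
Variable R : realType.

Lemma cvg_bigsum (I : finType) (f : I -> nat -> R) (l : I -> R) :
  (forall i, f i n @[n --> \oo] --> l i) ->
  (\sum_i f i n) @[n --> \oo] --> \sum_i l i.
Proof.
move=> H.
have -> : (fun n => \sum_i f i n) = \sum_i f i.
  by apply/funext => n; rewrite fct_sumE.
elim/big_ind2: _ => //.
- exact: cvg_cst.
- by move=> u a v b ua vb; apply: cvgD.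
Qed.

Lemma cvg_bigsum2 (I J : finType) (f : I -> J -> nat -> R) (l : I -> J -> R) :
  (forall i j, f i j n @[n --> \oo] --> l i j) ->
  (\sum_i \sum_j f i j n) @[n --> \oo] --> \sum_i \sum_j l i j.
Proof. by move=> H; apply: cvg_bigsum => i; apply: cvg_bigsum. Qed.
End Lim.

Section MDP.
Variables (R : realType) (S A : finType).
Variables (P : S -> A -> S -> R) (d0 : S -> R) (gamma : R) (pi : polT R S A).
Hypothesis hP : is_kernel P.
Hypothesis hd0 : is_dist_S d0.
Hypothesis hpi : is_policy pi.
Hypothesis hg : 0 <= gamma < 1.

Local Notation sd := (state_dist P d0 pi).

Lemma sd_ge0 t s : 0 <= sd t s.
Proof.
elim: t s => [|t IH] s /=; first by case: hd0.
apply: sumr_ge0 => s1 _; apply: sumr_ge0 => a _.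
apply: mulr_ge0; [apply: mulr_ge0 => //; by case: (hpi s1) | by case: (hP s1 a)].
Qed.

Lemma sd_sum1 t : \sum_s sd t s = 1.
Proof.
elim: t => [|t IH] /=; first by case: hd0.
rewrite exchange_big /=.
rewrite -[RHS]IH; apply: eq_bigr => s _.
rewrite exchange_big /=.
transitivity (\sum_a sd t s * pi s a).
  apply: eq_bigr => a _; rewrite -mulr_sumr.
  by case: (hP s a) => _ ->; rewrite mulr1.
by rewrite -mulr_sumr; case: (hpi s) => _ ->; rewrite mulr1.
Qed.

Definition Gs N s := \sum_(t < N) gamma ^+ t * sd t s.

Lemma geo_bound N : \sum_(t < N) gamma ^+ t <= (1 - gamma)^-1.
Proof.
case/andP: hg => g0 g1.
have h1 : 0 < 1 - gamma by rewrite subr_gt0.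
have : (1 - gamma) * \sum_(t < N) gamma ^+ t = 1 - gamma ^+ N.
  elim: N => [|N IH]; first by rewrite big_ord0 mulr0 expr0 subrr.
  by rewrite big_ord_recr /= mulrDr IH exprS; ring.
move=> E; rewrite -(ler_pM2l h1) mulrV ?unitf_gt0 // E.
by rewrite lerBlDr lerDl exprn_ge0.
Qed.

Lemma Gs_le N s : Gs N s <= (1 - gamma)^-1.
Proof.
apply: le_trans (geo_bound N).
apply: ler_sum => t _.
case/andP: hg => g0 _.
rewrite -[X in _ <= X]mulr1 ler_wpM2l ?exprn_ge0 //.
rewrite -(sd_sum1 t) (bigD1 s) //= lerDl.
by apply: sumr_ge0 => *; apply: sd_ge0.
Qed.

Lemma Gs_nd s : nondecreasing_seq (Gs ^~ s).
Proof.
apply/nondecreasing_seqP => N; rewrite /Gs big_ord_recr /= lerDl.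
case/andP: hg => g0 _; apply: mulr_ge0; [exact: exprn_ge0 | exact: sd_ge0].
Qed.

Lemma Gs_cvg s : cvgn (Gs ^~ s).
Proof.
apply: nondecreasing_is_cvgn; first exact: Gs_nd.
by exists (1 - gamma)^-1 => _ [N _ <-]; apply: Gs_le.
Qed.

Definition Ls s := limn (Gs ^~ s).

Lemma Gs_to s : Gs N s @[N --> \oo] --> Ls s.
Proof. exact: Gs_cvg. Qed.

Lemma Ls_ge0 s : 0 <= Ls s.
Proof.
apply: limr_ge; first exact: Gs_cvg.
near=> N.
apply: sumr_ge0 => t _; case/andP: hg => g0 _.
apply: mulr_ge0; [exact: exprn_ge0 | exact: sd_ge0].
Unshelve. all: by end_near.
Qed.


Lemma Gs_flow N s' :
  Gs N.+1 s' = d0 s' + gamma * \sum_s \sum_a Gs N s * pi s a * P s a s'.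
Proof.
rewrite /Gs big_ord_recl /= expr0 mul1r; congr (_ + _).
have -> : \sum_s \sum_a (\sum_(t < N) gamma ^+ t * sd t s) * pi s a * P s a s' =
          \sum_(t < N) \sum_s \sum_a gamma ^+ t * sd t s * pi s a * P s a s'.
  symmetry; rewrite exchange_big /=; apply: eq_bigr => s _.
  rewrite exchange_big /=; apply: eq_bigr => a _.
  by rewrite !mulr_suml.
rewrite mulr_sumr; apply: eq_bigr => t _ /=.
rewrite /bump /= exprS -mulrA; congr (_ * _).
rewrite mulr_sumr; apply: eq_bigr => s _; rewrite mulr_sumr; apply: eq_bigr => a _.
by rewrite !mulrA.
Qed.

Lemma Ls_flow s' :
  Ls s' = d0 s' + gamma * \sum_s \sum_a Ls s * pi s a * P s a s'.
Proof.
have h1 : (fun N => Gs N.+1 s') @ \oo --> Ls s'.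
  by rewrite (cvg_shiftS (Gs ^~ s')); apply: Gs_to.
have h2 : (fun N => Gs N.+1 s') @ \oo -->
          d0 s' + gamma * \sum_s \sum_a Ls s * pi s a * P s a s'.
  under eq_fun do rewrite Gs_flow.
  apply: cvgD; first exact: cvg_cst.
  apply: cvgMr; apply: cvg_bigsum2 => s a.
  by apply: cvgMl; apply: cvgMl; apply: Gs_to.
exact: (cvg_unique _ h1 h2).
Qed.

Lemma Ls_sum : \sum_s Ls s = (1 - gamma)^-1.
Proof.
have E : \sum_s Ls s = 1 + gamma * \sum_s Ls s.
  rewrite {1}(eq_bigr _ (fun s _ => Ls_flow s)) big_split /=.
  case: hd0 => _ ->; congr (_ + _); rewrite -mulr_sumr; congr (_ * _).
  rewrite exchange_big /=; apply: eq_bigr => s _.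
  rewrite exchange_big /=.
  transitivity (\sum_a Ls s * pi s a).
    apply: eq_bigr => a _; rewrite -mulr_sumr.
    by case: (hP s a) => _ ->; rewrite mulr1.
  by rewrite -mulr_sumr; case: (hpi s) => _ ->; rewrite mulr1.
case/andP: hg => g0 g1.
have h1 : 1 - gamma != 0 by rewrite subr_eq0 eq_sym lt_eqF.
apply: (mulfI h1); rewrite mulfV //.
by rewrite mulrBl mul1r {1}E; ring.
Qed.

Lemma J_lamE (Rw : S -> A -> R) lam :
  J_lam P Rw d0 gamma lam pi =
  \sum_s \sum_a Ls s * (pi s a * (Rw s a - lam * ln (pi s a))).
Proof.
rewrite /J_lam.
have -> : (fun N => \sum_(t < N) gamma ^+ t *
     \sum_s \sum_a sd t s * pi s a * (Rw s a - lam * ln (pi s a))) =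
     (fun N => \sum_s \sum_a Gs N s * (pi s a * (Rw s a - lam * ln (pi s a)))).
  apply/funext => N; rewrite /Gs.
  under eq_bigr do rewrite mulr_sumr.
  rewrite exchange_big /=; apply: eq_bigr => s _.
  under eq_bigr do rewrite mulr_sumr.
  rewrite exchange_big /=; apply: eq_bigr => a _.
  rewrite mulr_suml; apply: eq_bigr => t _; ring.
apply: cvg_lim => //; apply: cvg_bigsum2 => s a.
by apply: cvgMl; apply: Gs_to.
Qed.

Lemma occ_SE s : occ_S P d0 gamma pi s = (1 - gamma) * Ls s.
Proof. by []. Qed.

End MDP.

Section Alg.
Variable R : realType.

Lemma ln_le_sub1 (x : R) : 0 < x -> ln x <= x - 1.
Proof.
move=> x0; have H : -1 < x - 1 by lra.
by have := @le_ln1Dx R (x - 1) H; rewrite (_ : 1 + (x - 1) = x) //; ring.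
Qed.

Lemma ent_term (p k : R) : 0 <= p -> 0 < k -> p * (- ln p - ln k) <= k^-1 - p.
Proof.
move=> p0 k0; have [->|pp] := eqVneq p 0; first by rewrite mul0r subr0 invr_ge0 ltW.
have p0' : 0 < p by rewrite lt_def pp.
have pk : 0 < p * k by apply: mulr_gt0.
have E : - ln p - ln k = ln ((p * k)^-1).
  by rewrite lnV ?posrE // lnM ?posrE // opprD.
have H1 := @ln_le_sub1 ((p * k)^-1) (ltac:(by rewrite invr_gt0)).
rewrite E; apply: le_trans (ler_wpM2l p0 H1) _.
by rewrite mulrBr mulr1 invfM mulrA mulfV // mul1r.
Qed.

Lemma gibbs_term (p q : R) : 0 < p -> 0 <= q -> q * (ln p - ln q) <= p - q.
Proof.
move=> p0 q0; have [->|qq] := eqVneq q 0; first by rewrite mul0r subr0 ltW.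
have q0' : 0 < q by rewrite lt_def qq.
have E : ln p - ln q = ln (p / q) by rewrite ln_div ?posrE.
have H1 := @ln_le_sub1 (p / q) (divr_gt0 p0 q0').
rewrite E; apply: le_trans (ler_wpM2l q0 H1) _.
by rewrite mulrBr mulr1 mulrC divfK.
Qed.

Lemma cs_quad (a b c : R) : (forall t, 0 <= t ^+ 2 * a - 2 * t * b + c) ->
  0 <= a -> b ^+ 2 <= a * c.
Proof.
move=> H a0; have [a00|ap] := eqVneq a 0.
  have [b00|bn] := eqVneq b 0; first by rewrite b00 a00 expr0n /= mul0r.
  have := H ((c + 1) / (2 * b)).
  have -> : ((c + 1) / (2 * b)) ^+ 2 * a - 2 * ((c + 1) / (2 * b)) * b + c = -1.
    by rewrite a00; field; rewrite bn.
  by rewrite lerNr oppr0 ler10.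
have a0' : 0 < a by rewrite lt_def ap.
have := H (b / a).
have -> : (b / a) ^+ 2 * a - 2 * (b / a) * b + c = c - b ^+ 2 / a.
  by field.
by rewrite subr_ge0 ler_pdivrMr // mulrC.
Qed.

Lemma cs2 (S A : finType) (w x y : S -> A -> R) : (forall s a, 0 <= w s a) ->
  `|\sum_s \sum_a w s a * x s a * y s a| <=
  Num.sqrt (\sum_s \sum_a w s a * x s a ^+ 2) *
  Num.sqrt (\sum_s \sum_a w s a * y s a ^+ 2).
Proof.
move=> w0.
set a := \sum_s \sum_a _ * x _ _ ^+ 2.
set b := \sum_s \sum_a _.
set c := \sum_s \sum_a _ * y _ _ ^+ 2.
have a0 : 0 <= a by apply: sumr_ge0 => s _; apply: sumr_ge0 => a' _; apply: mulr_ge0 => //; apply: sqr_ge0.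
have H : b ^+ 2 <= a * c.
  apply: cs_quad => // t.
  have -> : t ^+ 2 * a - 2 * t * b + c =
            \sum_s \sum_a' w s a' * (t * x s a' - y s a') ^+ 2.
    transitivity (\sum_s (t ^+ 2 * (\sum_a' w s a' * x s a' ^+ 2)
       - 2 * t * (\sum_a' w s a' * x s a' * y s a') + \sum_a' w s a' * y s a' ^+ 2)).
      by rewrite big_split sumrB /= -!mulr_sumr.
    apply: eq_bigr => s _.
    transitivity (\sum_a' (t ^+ 2 * (w s a' * x s a' ^+ 2)
       - 2 * t * (w s a' * x s a' * y s a') + w s a' * y s a' ^+ 2)).
      by rewrite big_split sumrB /= -!mulr_sumr.
    by apply: eq_bigr => a' _; ring.
  apply: sumr_ge0 => s _; apply: sumr_ge0 => a' _; apply: mulr_ge0 => //; apply: sqr_ge0.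
rewrite -sqrtrM // -sqrtr_sqr.
by rewrite ler_sqrt // mulr_ge0 //; apply: sumr_ge0 => s _; apply: sumr_ge0 => a' _; apply: mulr_ge0 => //; apply: sqr_ge0.
Qed.
End Alg.

Section Perf.
Variables (R : realType) (S A : finType).
Variables (P : S -> A -> S -> R) (d0 : S -> R) (gamma : R) (Rw : S -> A -> R).
Hypothesis hP : is_kernel P.
Hypothesis hd0 : is_dist_S d0.
Hypothesis hg : 0 <= gamma < 1.

Lemma perf_diff (pi : polT R S A) (hpi : is_policy pi) lam (V : valT R S) :
  J_lam P Rw d0 gamma lam pi = \sum_s d0 s * V s +
  \sum_s \sum_a Ls P d0 gamma pi s * (pi s a * (cons_op P Rw gamma lam pi V s a - V s)).
Proof.
rewrite (J_lamE hP hd0 hpi hg).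
set L := Ls P d0 gamma pi.
set J' := \sum_s \sum_a L s * (pi s a * (Rw s a - lam * ln (pi s a))).
have T1 : \sum_s \sum_a L s * (pi s a * (cons_op P Rw gamma lam pi V s a - V s)) =
   J' + \sum_s \sum_a \sum_s' gamma * L s * pi s a * P s a s' * V s'
      - \sum_s \sum_a L s * pi s a * V s.
  rewrite /J' -!big_split -sumrB; apply: eq_bigr => s _.
  rewrite -!big_split -sumrB; apply: eq_bigr => a _ /=.
  rewrite /cons_op /PV.
  have -> : \sum_s' gamma * L s * pi s a * P s a s' * V s' =
            gamma * L s * pi s a * \sum_s' P s a s' * V s'.
    by rewrite mulr_sumr; apply: eq_bigr => s' _; ring.
  ring.
have T2 : \sum_s \sum_a L s * pi s a * V s = \sum_s L s * V s.
  apply: eq_bigr => s _; rewrite -mulr_suml -mulr_sumr.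
  by case: (hpi s) => _ ->; rewrite mulr1.
have T3 : \sum_s \sum_a \sum_s' gamma * L s * pi s a * P s a s' * V s' =
          \sum_s' V s' * (L s' - d0 s').
  transitivity (\sum_s' \sum_s \sum_a gamma * L s * pi s a * P s a s' * V s').
    symmetry; rewrite exchange_big /=; apply: eq_bigr => s _.
    by rewrite exchange_big.
  apply: eq_bigr => s' _.
  rewrite /L (Ls_flow hP hd0 hpi hg s') -/L addrAC subrr add0r mulrA.
  rewrite mulr_sumr; apply: eq_bigr => s _; rewrite mulr_sumr; apply: eq_bigr => a _; ring.
rewrite T1 T2 T3.
have -> : \sum_s' V s' * (L s' - d0 s') = \sum_s L s * V s - \sum_s d0 s * V s.
  by rewrite -sumrB; apply: eq_bigr => s _; ring.
ring.
Qed.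


Lemma pol_le1 (pi : polT R S A) s a : is_policy pi -> pi s a <= 1.
Proof.
move=> hpi; case: (hpi s) => h0 h1; rewrite -h1 (bigD1 a) //= lerDl.
by apply: sumr_ge0.
Qed.

Lemma ent_bounds (pi : polT R S A) s : is_policy pi -> (0 < #|A|)%N ->
  0 <= \sum_a pi s a * (- ln (pi s a)) <= ln (#|A|%:R).
Proof.
move=> hpi hA; case: (hpi s) => h0 h1; apply/andP; split.
  apply: sumr_ge0 => a _; apply: mulr_ge0 => //.
  by rewrite oppr_ge0; apply: ln_le0; apply: pol_le1.
have k0 : 0 < (#|A|%:R : R) by rewrite ltr0n.
rewrite -subr_le0.
have -> : \sum_a pi s a * - ln (pi s a) - ln #|A|%:R =
          \sum_a pi s a * (- ln (pi s a) - ln #|A|%:R).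
  rewrite -[X in _ - X]mul1r -h1 mulr_suml -sumrB.
  by apply: eq_bigr => a _; ring.
apply: le_trans (ler_sum _ (fun a _ => ent_term (h0 a) k0)) _.
rewrite sumrB sumr_const h1 (_ : #|xpredT| = #|A|) //.
rewrite -[X in X - 1]mulr_natr mulVf ?subrr //.
by rewrite lt0r_neq0.
Qed.

Lemma J_eq (pi : polT R S A) (hpi : is_policy pi) :
  J P Rw d0 gamma pi = \sum_s \sum_a Ls P d0 gamma pi s * (pi s a * Rw s a).
Proof.
rewrite /J (J_lamE hP hd0 hpi hg); apply: eq_bigr => s _; apply: eq_bigr => a _.
by rewrite mul0r subr0.
Qed.

Lemma J_lam_J (pi : polT R S A) (hpi : is_policy pi) lam :
  J_lam P Rw d0 gamma lam pi = J P Rw d0 gamma pi +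
   lam * \sum_s Ls P d0 gamma pi s * \sum_a pi s a * (- ln (pi s a)).
Proof.
rewrite (J_eq hpi) (J_lamE hP hd0 hpi hg) mulr_sumr -big_split /=.
apply: eq_bigr => s _; rewrite !mulr_sumr -big_split /=.
by apply: eq_bigr => a _; ring.
Qed.

Lemma J_le_J_lam (pi : polT R S A) (hpi : is_policy pi) lam : 0 <= lam -> (0 < #|A|)%N ->
  J P Rw d0 gamma pi <= J_lam P Rw d0 gamma lam pi <=
  J P Rw d0 gamma pi + lam * ln (#|A|%:R) / (1 - gamma).
Proof.
move=> l0 hA; rewrite (J_lam_J hpi) lerDl lerD2l; apply/andP; split.
  apply: mulr_ge0 => //; apply: sumr_ge0 => s _; apply: mulr_ge0.
    exact: (Ls_ge0 hP hd0 hpi hg).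
  by case/andP: (ent_bounds s hpi hA).
rewrite -mulrA ler_wpM2l //.
rewrite -(Ls_sum hP hd0 hpi hg) mulrC mulr_suml.
apply: ler_sum => s _; rewrite ler_wpM2l //; first exact: (Ls_ge0 hP hd0 hpi hg).
by case/andP: (ent_bounds s hpi hA).
Qed.


Lemma occ_sum (pi : polT R S A) (X : S -> A -> R) :
  \sum_s \sum_a Ls P d0 gamma pi s * (pi s a * X s a) =
  (1 - gamma)^-1 * \sum_s \sum_a occ P d0 gamma pi s a * X s a.
Proof.
case/andP: hg => g0 g1.
have h1 : 1 - gamma != 0 by rewrite subr_eq0 eq_sym lt_eqF.
rewrite mulr_sumr; apply: eq_bigr => s _; rewrite mulr_sumr; apply: eq_bigr => a _.
rewrite /occ occ_SE; field.
by rewrite h1.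
Qed.

Lemma occ_cs (pi : polT R S A) (mu : S -> A -> R) (X : S -> A -> R) :
  (forall s a, 0 <= mu s a) ->
  (forall s a, mu s a = 0 -> occ P d0 gamma pi s a = 0) ->
  `|\sum_s \sum_a occ P d0 gamma pi s a * X s a| <=
  Num.sqrt (conc_term P d0 gamma mu pi) * Num.sqrt (sqnorm mu X).
Proof.
move=> mu0 hsupp.
have -> : \sum_s \sum_a occ P d0 gamma pi s a * X s a =
   \sum_s \sum_a mu s a * (occ P d0 gamma pi s a / mu s a) * X s a.
  apply: eq_bigr => s _; apply: eq_bigr => a _.
  have [m0|mn] := eqVneq (mu s a) 0; first by rewrite m0 hsupp // !mul0r.
  by rewrite [mu s a * _]mulrC divfK.
exact: cs2.
Qed.


Lemma conc_ge0 (mu : S -> A -> R) (pi : polT R S A) : (forall s a, 0 <= mu s a) ->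
  0 <= conc_term P d0 gamma mu pi.
Proof.
move=> mu0; apply: sumr_ge0 => s _; apply: sumr_ge0 => a _.
by apply: mulr_ge0 => //; apply: sqr_ge0.
Qed.

Lemma gibbs_step (pis pih : polT R S A) (V : valT R S) lam s :
  is_policy pis -> is_policy pih -> (forall a, 0 < pih s a) -> 0 <= lam ->
  \sum_a pis s a * (cons_op P Rw gamma lam pis V s a - V s) <=
  \sum_a pis s a * (cons_op P Rw gamma lam pih V s a - V s).
Proof.
move=> hs hh hpos l0; rewrite -subr_ge0 -sumrB.
have -> : \sum_a (pis s a * (cons_op P Rw gamma lam pih V s a - V s) -
                  pis s a * (cons_op P Rw gamma lam pis V s a - V s)) =
          - (lam * \sum_a pis s a * (ln (pih s a) - ln (pis s a))).
  rewrite mulr_sumr -sumrN; apply: eq_bigr => a _; rewrite /cons_op; ring.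
rewrite oppr_ge0 mulr_ge0_le0 //.
apply: le_trans (ler_sum _ (fun a _ => gibbs_term (hpos a) _)) _.
  by case: (hs s).
case: (hs s) => _ h1; case: (hh s) => _ h2.
by rewrite sumrB h1 h2 subrr.
Qed.

Lemma det_bound (pistar pistar_lam pih : polT R S A) (V : valT R S) lam (Cc : R)
   (mu : S -> A -> R) :
  is_policy pistar -> is_policy pistar_lam -> is_policy pih ->
  (forall s a, 0 < pih s a) -> 0 < lam -> (0 < #|A|)%N ->
  J_lam P Rw d0 gamma lam pistar <= J_lam P Rw d0 gamma lam pistar_lam ->
  (forall s a, 0 <= mu s a) ->
  (forall s a, mu s a = 0 -> occ P d0 gamma pistar_lam s a = 0) ->
  (forall s a, mu s a = 0 -> occ P d0 gamma pih s a = 0) ->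
  conc_term P d0 gamma mu pistar_lam <= Cc -> conc_term P d0 gamma mu pih <= Cc ->
  J P Rw d0 gamma pistar - J P Rw d0 gamma pih <=
  lam * ln (#|A|%:R) / (1 - gamma) + 2 * Num.sqrt Cc / (1 - gamma) *
  Num.sqrt (sqnorm mu (fun s a => V s - cons_op P Rw gamma lam pih V s a)).
Proof.
move=> hs hsl hh hpos l0 hA Jmax mu0 sup1 sup2 C1 C2.
case/andP: hg => g0 g1.
have gi : 0 < (1 - gamma)^-1 by rewrite invr_gt0 subr_gt0.
set res := fun s a => cons_op P Rw gamma lam pih V s a - V s.
set f := sqnorm mu _.
have fE : f = sqnorm mu res.
  rewrite /f /sqnorm; apply: eq_bigr => s _; apply: eq_bigr => a _.
  by rewrite /res -sqrrN opprB.
case/andP: (J_le_J_lam hs (ltW l0) hA) => Hs _.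
case/andP: (J_le_J_lam hh (ltW l0) hA) => _ Hh.
have E1 : J_lam P Rw d0 gamma lam pistar_lam <= \sum_s d0 s * V s +
    (1 - gamma)^-1 * \sum_s \sum_a occ P d0 gamma pistar_lam s a * res s a.
  rewrite (perf_diff hsl lam V) lerD2l -occ_sum ler_sum // => s _.
  rewrite -!mulr_sumr ler_wpM2l //; first exact: (Ls_ge0 hP hd0 hsl hg).
  exact: gibbs_step (ltW l0).
have E2 : J_lam P Rw d0 gamma lam pih = \sum_s d0 s * V s +
    (1 - gamma)^-1 * \sum_s \sum_a occ P d0 gamma pih s a * res s a.
  by rewrite (perf_diff hh lam V) occ_sum.
have B1 := occ_cs res mu0 sup1.
have B2 := occ_cs res mu0 sup2.
have Cc0 : 0 <= Cc by apply: le_trans C1; apply: conc_ge0.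
have sC1 : Num.sqrt (conc_term P d0 gamma mu pistar_lam) <= Num.sqrt Cc by rewrite ler_sqrt.
have sC2 : Num.sqrt (conc_term P d0 gamma mu pih) <= Num.sqrt Cc by rewrite ler_sqrt.
rewrite -fE in B1 B2.
have sf0 := sqrtr_ge0 f.
set b1 := \sum_s \sum_a _ in B1 E1.
set b2 := \sum_s \sum_a _ in B2 E2.
have Hb : b1 - b2 <= 2 * Num.sqrt Cc * Num.sqrt f.
  have h1 : b1 <= Num.sqrt Cc * Num.sqrt f.
    apply: le_trans (ler_norm _) (le_trans B1 _); exact: ler_wpM2r.
  have h2 : - b2 <= Num.sqrt Cc * Num.sqrt f.
    rewrite -normrN in B2.
    apply: le_trans (ler_norm _) (le_trans B2 _); exact: ler_wpM2r.
  lra.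
have Hb' : (1 - gamma)^-1 * (b1 - b2) <= 2 * Num.sqrt Cc / (1 - gamma) * Num.sqrt f.
  have -> : 2 * Num.sqrt Cc / (1 - gamma) * Num.sqrt f =
            (1 - gamma)^-1 * (2 * Num.sqrt Cc * Num.sqrt f) by ring.
  by rewrite ler_wpM2l // ltW.
rewrite E2 in Hh.
have := le_trans Hs Jmax; have := le_trans E1.
lra.
Qed.
End Perf.
Section Chernoff.
Variables (R : realType) (T : finType) (p : T -> R) (n : nat).
Hypothesis p0 : forall x, 0 <= p x.
Hypothesis p1 : \sum_x p x = 1.

Local Notation dT := {ffun 'I_n -> T}.
Definition dprob (D : dT) := \prod_i p (D i).

Lemma dprob_ge0 D : 0 <= dprob D.
Proof. by apply: prodr_ge0 => i _. Qed.

Lemma dprob_sum1 : \sum_D dprob D = 1.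
Proof.
rewrite /dprob -(bigA_distr_bigA (fun (i : 'I_n) (x : T) => p x)) /=.
by rewrite big1 // => i _.
Qed.

Lemma exp_quad (z : R) : z <= 1/2 -> expR z <= 1 + z + 2 * z ^+ 2.
Proof.
move=> hz.
have h1 : 0 < 1 - z by lra.
have h2 : 1 - z <= expR (- z) by have := expR_ge1Dx (- z); rewrite -[1 - z]/(1 + - z).
have h3 : expR z <= (1 - z)^-1.
  rewrite -[expR z]invrK lef_pV2 ?posrE ?invr_gt0 ?expR_gt0 //.
  by rewrite -expRN.
apply: le_trans h3 _.
rewrite -[X in X <= _]mul1r ler_pdivrMr //.
have : 0 <= z ^+ 2 * (1 - 2 * z) by apply: mulr_ge0; [apply: sqr_ge0 | lra].
move=> H; nra.
Qed.

Lemma chernoff (Z : T -> R) (l : R) : (forall x, Z x <= 1/2) ->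
  \sum_(D : dT | n%:R * (\sum_x p x * Z x + 2 * \sum_x p x * Z x ^+ 2) + l
     <= \sum_i Z (D i)) dprob D <= expR (- l).
Proof.
move=> hZ; set m := \sum_x p x * Z x; set v := \sum_x p x * Z x ^+ 2; set Tt := n%:R * (m + 2 * v) + l.
apply: le_trans (_ : \sum_(D : dT) dprob D * expR (\sum_i Z (D i) - Tt) <= _).
  rewrite [X in _ <= X](bigID (fun D : dT => Tt <= \sum_i Z (D i))) /=.
  apply: le_trans (_ : _ <= \sum_(D : dT | Tt <= \sum_i Z (D i)) dprob D * expR (\sum_i Z (D i) - Tt)) _.
    apply: ler_sum => D hD; rewrite -[X in X <= _]mulr1 ler_wpM2l ?dprob_ge0 //.
    by apply: le_trans (expR_ge1Dx _); rewrite lerDl subr_ge0.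
  rewrite lerDl; apply: sumr_ge0 => D _; apply: mulr_ge0; [exact: dprob_ge0|exact: expR_ge0].
have E : forall D : dT, dprob D * expR (\sum_i Z (D i) - Tt) =
   expR (- Tt) * \prod_i (p (D i) * expR (Z (D i))).
  move=> D; rewrite expRD expR_sum big_split /= /dprob; ring.
under eq_bigr do rewrite E.
rewrite -mulr_sumr.
rewrite -(bigA_distr_bigA (fun (i : 'I_n) (x : T) => p x * expR (Z x))) /=.
rewrite prodr_const card_ord.
have B : \sum_x p x * expR (Z x) <= expR (m + 2 * v).
  apply: le_trans (_ : _ <= 1 + (m + 2 * v)) _; last exact: expR_ge1Dx.
  have E2 : \sum_x p x * (1 + Z x + 2 * Z x ^+ 2) = 1 + (m + 2 * v).
    transitivity (\sum_x (p x + p x * Z x + 2 * (p x * Z x ^+ 2))).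
      by apply: eq_bigr => x _; ring.
    by rewrite !big_split /= p1 -mulr_sumr addrA.
  rewrite -E2; apply: ler_sum => x _.
  by rewrite ler_wpM2l // exp_quad.
have B0 : 0 <= \sum_x p x * expR (Z x).
  by apply: sumr_ge0 => x _; apply: mulr_ge0 => //; exact: expR_ge0.
apply: le_trans (ler_wpM2l (expR_ge0 _) (lerXn2r _ _ _ B)) _.
- by rewrite nnegrE.
- by rewrite nnegrE expR_ge0.
rewrite -expRM_natl -expRD /Tt.
by rewrite le_eqVlt; apply/orP; left; apply/eqP; congr expR; ring.
Qed.

Lemma has_ind (I : Type) (ev : I -> bool) (idx : seq I) :
  has ev idx -> 1 <= \sum_(i <- idx) (ev i)%:R :> R.
Proof.
elim: idx => [//|i idx IH] /=; rewrite big_cons.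
case: (ev i) => /= H.
  by rewrite lerDl; apply: sumr_ge0 => j _; case: (ev j).
by rewrite add0r IH.
Qed.

Lemma union_bound (I : eqType) (ev : I -> dT -> bool) (idx : seq I) (E : dT -> bool) (eta : R) :
  (forall D, ~~ E D -> has (fun i => ev i D) idx) ->
  (forall i, i \in idx -> \sum_(D : dT | ev i D) dprob D <= eta) ->
  1 - (size idx)%:R * eta <= \sum_(D : dT | E D) dprob D.
Proof.
move=> hcov hev.
have S1 := dprob_sum1; rewrite (bigID E) /= in S1.
suff : \sum_(D : dT | ~~ E D) dprob D <= (size idx)%:R * eta by lra.
apply: le_trans (_ : _ <= \sum_(D : dT) \sum_(i <- idx) (ev i D)%:R * dprob D) _.
  apply: le_trans (_ : _ <= \sum_(D : dT | ~~ E D) \sum_(i <- idx) (ev i D)%:R * dprob D) _.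
    apply: ler_sum => D hD; rewrite -mulr_suml -[X in X <= _]mul1r.
    by rewrite ler_wpM2r ?dprob_ge0 //; apply: has_ind; apply: hcov.
  rewrite [X in _ <= X](bigID (fun D => ~~ E D)) /= lerDl.
  by apply: sumr_ge0 => D _; apply: sumr_ge0 => i _; apply: mulr_ge0; [case: (ev i D)|exact: dprob_ge0].
rewrite exchange_big /=.
have H : forall i, i \in idx -> \sum_(D : dT) (ev i D)%:R * dprob D <= eta.
  move=> i hi; apply: le_trans (hev i hi).
  rewrite [X in _ <= X]big_mkcond le_eqVlt; apply/orP; left; apply/eqP; apply: eq_bigr => D _; by case: (ev i D); rewrite ?mul1r ?mul0r.
elim: idx H {hcov hev} => [|i idx IH] H; first by rewrite big_nil mul0r.
rewrite big_cons /= -addn1 natrD mulrDl mul1r addrC.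
apply: lerD; first by apply: IH => j hj; apply: H; rewrite inE hj orbT.
by apply: H; rewrite mem_head.
Qed.
End Chernoff.
Section MinMax.
Variable R : realType.

Lemma bigmin_le (T : eqType) (x0 : R) (l : seq T) (f : T -> R) y :
  y \in l -> \big[Num.min/x0]_(x <- l) f x <= f y.
Proof.
elim: l => [//|z l IH]; rewrite inE big_cons => /orP [/eqP ->|hy].
  by rewrite ge_min lexx.
by rewrite ge_min (IH hy) orbT.
Qed.

Lemma bigmin_att (T : eqType) (x0 : R) (l : seq T) (f : T -> R) :
  \big[Num.min/x0]_(x <- l) f x = x0 \/ exists2 x, x \in l & \big[Num.min/x0]_(x <- l) f x = f x.
Proof.
elim: l => [|z l IH]; first by left; rewrite big_nil.
rewrite !big_cons; case: (leP (f z) (\big[Num.min/x0]_(x <- l) f x)) => H.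
  by right; exists z; rewrite ?mem_head //; exact: min_l.
case: IH => [->|[x hx ->]]; [by left | by right; exists x; rewrite // inE hx orbT].
Qed.

Lemma bigmax_ge (T : eqType) (x0 : R) (l : seq T) (f : T -> R) y :
  y \in l -> f y <= \big[Num.max/x0]_(x <- l) f x.
Proof.
elim: l => [//|z l IH]; rewrite inE big_cons => /orP [/eqP ->|hy].
  by rewrite le_max lexx.
by rewrite le_max (IH hy) orbT.
Qed.

Lemma bigmax_att (T : eqType) (x0 : R) (l : seq T) (f : T -> R) :
  \big[Num.max/x0]_(x <- l) f x = x0 \/ exists2 x, x \in l & \big[Num.max/x0]_(x <- l) f x = f x.
Proof.
elim: l => [|z l IH]; first by left; rewrite big_nil.
rewrite !big_cons; case: (leP (f z) (\big[Num.max/x0]_(x <- l) f x)) => H.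

  case: IH => [->|[x hx ->]]; [by left | by right; exists x; rewrite // inE hx orbT].
by right; exists z; rewrite ?mem_head //; exact: max_l (ltW H).
Qed.

Lemma minl_le (T : eqType) (d : T) l (f : T -> R) y : y \in l -> minl d l f <= f y.
Proof. exact: bigmin_le. Qed.

Lemma minl_att (T : eqType) (d : T) l (f : T -> R) : l != [::] ->
  exists2 x, x \in l & minl d l f = f x.
Proof.
case: l => [//|z l] _; rewrite /minl /=; case: (bigmin_att (f z) (z :: l) f) => [->|//].
by exists z; rewrite ?mem_head.
Qed.

Lemma maxl_ge (T : eqType) (d : T) l (f : T -> R) y : y \in l -> f y <= maxl d l f.
Proof. exact: bigmax_ge. Qed.

Lemma maxl_att (T : eqType) (d : T) l (f : T -> R) : l != [::] ->
  exists2 x, x \in l & maxl d l f = f x.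
Proof.
case: l => [//|z l] _; rewrite /maxl /=; case: (bigmax_att (f z) (z :: l) f) => [->|//].
by exists z; rewrite ?mem_head.
Qed.
End MinMax.
Section Samp.
Variables (R : realType) (S A : finType).

Lemma sum3 (F : S * A * S -> R) :
  \sum_(x : S * A * S) F x = \sum_s \sum_a \sum_s' F ((s, a), s').
Proof.
rewrite (eq_bigr (fun x => F (x.1, x.2))); last by case.
rewrite -(pair_bigA _ (fun q s' => F (q, s'))) /=.
rewrite (eq_bigr (fun q => \sum_s' F ((q.1, q.2), s'))); last by case.
by rewrite -(pair_bigA _ (fun s a => \sum_s' F ((s, a), s'))).
Qed.

Lemma X_bounds (W v g y : R) : 0 <= v <= W -> 0 <= g <= 2 * W -> 0 <= y <= 2 * W ->
  ((v - y) ^+ 2 - (g - y) ^+ 2) ^+ 2 <= 16 * W ^+ 2 * (v - g) ^+ 2 /\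
  `|(v - y) ^+ 2 - (g - y) ^+ 2| <= 8 * W ^+ 2.
Proof.
move=> /andP [v0 v1] /andP [g0 g1] /andP [y0 y1].
have E : (v - y) ^+ 2 - (g - y) ^+ 2 = (v - g) * (v + g - 2 * y) by ring.
have h1 : (v + g - 2 * y) ^+ 2 <= 16 * W ^+ 2.
  have : -4 * W <= v + g - 2 * y <= 3 * W by apply/andP; split; lra.
  move=> /andP [a b]; nra.
have h2 : (v - g) ^+ 2 <= 4 * W ^+ 2.
  have : - 2 * W <= v - g <= W by apply/andP; split; lra.
  move=> /andP [a b]; nra.
rewrite E; split.
  rewrite exprMn mulrC; apply: ler_wpM2r => //; exact: sqr_ge0.
rewrite -(@ler_pXn2r _ 2) ?nnegrE ?normr_ge0 //; last by nra.
rewrite real_normK ?num_real // exprMn.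
have : (v - g) ^+ 2 * (v + g - 2 * y) ^+ 2 <= 4 * W ^+ 2 * (16 * W ^+ 2).
  apply: le_trans (ler_wpM2r (sqr_ge0 _) h2) _.
  by apply: ler_wpM2l => //; nra.
nra.
Qed.

Variables (P : S -> A -> S -> R) (Rw : S -> A -> R) (mu : S -> A -> R) (gamma lam : R).
Hypothesis hP : is_kernel P.
Hypothesis mu0 : forall s a, 0 <= mu s a.

Definition pS (x : S * A * S) := mu x.1.1 x.1.2 * P x.1.1 x.1.2 x.2.
Definition yv (pi : polT R S A) (V : valT R S) (x : S * A * S) :=
  Rw x.1.1 x.1.2 + gamma * V x.2 - lam * ln (pi x.1.1 x.1.2).
Definition Xf (V : valT R S) (pi : polT R S A) (g : polT R S A) x :=
  (V x.1.1 - yv pi V x) ^+ 2 - (g x.1.1 x.1.2 - yv pi V x) ^+ 2.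
Definition fres (V : valT R S) (pi : polT R S A) :=
  sqnorm mu (fun s a => V s - cons_op P Rw gamma lam pi V s a).
Definition hres (V : valT R S) (pi : polT R S A) (g : polT R S A) :=
  sqnorm mu (fun s a => g s a - cons_op P Rw gamma lam pi V s a).

Lemma pS_ge0 x : 0 <= pS x.
Proof. by apply: mulr_ge0 => //; case: (hP x.1.1 x.1.2) => h _; apply: h. Qed.

Lemma emp_eq n (D : dataset S A n) V pi g :
  loss_L Rw gamma lam D V pi - loss_R Rw gamma lam D g V pi =
  n%:R^-1 * \sum_i Xf V pi g (D i).
Proof.
rewrite /loss_L /loss_R -mulrBr -sumrB; congr (_ * _); apply: eq_bigr => i _.
by rewrite /Xf /yv; congr (_ - _); congr (_ ^+ 2); ring.
Qed.

Lemma fres_ge0 V pi : 0 <= fres V pi.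
Proof. by apply: sumr_ge0 => s _; apply: sumr_ge0 => a _; apply: mulr_ge0 => //; apply: sqr_ge0. Qed.
Lemma hres_ge0 V pi g : 0 <= hres V pi g.
Proof. by apply: sumr_ge0 => s _; apply: sumr_ge0 => a _; apply: mulr_ge0 => //; apply: sqr_ge0. Qed.

Lemma sumP_y pi V s a : \sum_s' P s a s' * yv pi V ((s, a), s') = cons_op P Rw gamma lam pi V s a.
Proof.
case: (hP s a) => _ h1.
rewrite /yv /cons_op /PV /=.
transitivity (\sum_s' (P s a s' * (Rw s a - lam * ln (pi s a)) + gamma * (P s a s' * V s'))).
  by apply: eq_bigr => s' _; ring.
by rewrite big_split /= -mulr_suml -mulr_sumr h1; ring.
Qed.

Lemma mean_eq V pi g : \sum_x pS x * Xf V pi g x = fres V pi - hres V pi g.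
Proof.
rewrite sum3 /fres /hres /sqnorm -sumrB; apply: eq_bigr => s _.
rewrite -sumrB; apply: eq_bigr => a _ /=.
rewrite /pS /=.
transitivity (mu s a * ((V s - g s a) * (V s + g s a) -
   2 * (V s - g s a) * \sum_s' P s a s' * yv pi V ((s, a), s'))).
  case: (hP s a) => _ h1.
  transitivity (\sum_s' (mu s a * ((V s - g s a) * (V s + g s a)) * P s a s'
     - mu s a * (2 * (V s - g s a)) * (P s a s' * yv pi V (s, a, s')))).
    by apply: eq_bigr => s' _; rewrite /Xf /=; ring.
  by rewrite sumrB -mulr_sumr -mulr_sumr h1; ring.
by rewrite sumP_y; ring.
Qed.


Lemma mom2 (W : R) (V : valT R S) (pi g : polT R S A) :
  (forall s, 0 <= V s <= W) -> (forall s a, 0 <= g s a <= 2 * W) ->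
  (forall x, 0 <= yv pi V x <= 2 * W) ->
  \sum_x pS x * Xf V pi g x ^+ 2 <= 32 * W ^+ 2 * (fres V pi + hres V pi g).
Proof.
move=> hV hg hy.
have -> : 32 * W ^+ 2 * (fres V pi + hres V pi g) =
  \sum_s \sum_a mu s a * (32 * W ^+ 2 * ((V s - cons_op P Rw gamma lam pi V s a) ^+ 2
     + (g s a - cons_op P Rw gamma lam pi V s a) ^+ 2)).
  rewrite /fres /hres /sqnorm -big_split mulr_sumr /=; apply: eq_bigr => s _.
  rewrite -big_split mulr_sumr /=; apply: eq_bigr => a _; ring.
rewrite sum3; apply: ler_sum => s _; apply: ler_sum => a _.
set c := cons_op _ _ _ _ _ _ _ _.
apply: le_trans (_ : _ <= \sum_s' pS ((s, a), s') * (16 * W ^+ 2 * (V s - g s a) ^+ 2)) _.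
  apply: ler_sum => s' _; apply: ler_wpM2l; first exact: pS_ge0.
  by case: (X_bounds (hV s) (hg s a) (hy ((s, a), s'))).
rewrite -mulr_suml /pS /=.
have -> : \sum_s' mu s a * P s a s' = mu s a.
  by rewrite -mulr_sumr; case: (hP s a) => _ ->; rewrite mulr1.
apply: ler_wpM2l => //.
have : (V s - g s a) ^+ 2 <= 2 * ((V s - c) ^+ 2 + (g s a - c) ^+ 2).
  have -> : V s - g s a = (V s - c) - (g s a - c) by ring.
  set u := V s - c; set w := g s a - c.
  have : 0 <= (u + w) ^+ 2 by apply: sqr_ge0.
  nra.
have : 0 <= W ^+ 2 by apply: sqr_ge0.
nra.
Qed.

Lemma Xabs (W : R) (V : valT R S) (pi g : polT R S A) x :
  (forall s, 0 <= V s <= W) -> (forall s a, 0 <= g s a <= 2 * W) ->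
  (forall x, 0 <= yv pi V x <= 2 * W) -> `|Xf V pi g x| <= 8 * W ^+ 2.
Proof. by move=> hV hg hy; case: (X_bounds (hV x.1.1) (hg x.1.1 x.1.2) (hy x)). Qed.

End Samp.
Section Helpers.
Variable R : realType.

Lemma conv_up (nn th Sx m M2 l B : R) : 0 < nn -> 0 < th ->
  ~~ (nn * (th * m + 2 * (th ^+ 2 * M2)) + l <= th * Sx) -> M2 <= B ->
  Sx / nn < m + 2 * th * B + l / (nn * th).
Proof.
move=> n0 t0 H hB; rewrite -ltNge in H.
have nt : 0 < nn * th by apply: mulr_gt0.
set s := Sx / nn; set q := l / (nn * th).
have eS : Sx = nn * s by rewrite /s mulrC divfK ?gt_eqF.
have eL : l = nn * th * q by rewrite /q mulrC divfK ?gt_eqF.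
rewrite eS eL in H.
have H2 : nn * th * (s - m - 2 * th * M2 - q) < 0.
  have -> : nn * th * (s - m - 2 * th * M2 - q) =
            th * (nn * s) - (nn * (th * m + 2 * (th ^+ 2 * M2)) + nn * th * q) by ring.
  by rewrite subr_lt0.
rewrite pmulr_rlt0 // in H2.
have : 2 * th * M2 <= 2 * th * B by rewrite ler_wpM2l // mulr_ge0 // ltW.
lra.
Qed.

Lemma conv_lo (nn th Sx m M2 l B : R) : 0 < nn -> 0 < th ->
  ~~ (nn * (- th * m + 2 * (th ^+ 2 * M2)) + l <= - th * Sx) -> M2 <= B ->
  m - 2 * th * B - l / (nn * th) < Sx / nn.
Proof.
move=> n0 t0 H hB.
have H' : ~~ (nn * (th * - m + 2 * (th ^+ 2 * M2)) + l <= th * - Sx).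
  by rewrite !mulrN -!mulNr.
have := @conv_up nn th (- Sx) (- m) M2 l B n0 t0 H' hB.
rewrite mulNr; lra.
Qed.

Lemma stat_core (fh eG eV hs h1 E1 E0 D' : R) :
  0 <= hs <= eG -> 0 <= h1 -> 0 <= eV -> 0 <= D' ->
  fh - hs - (fh + hs) / 4 - D' < E1 ->
  E0 < eV - h1 + (eV + h1) / 4 + D' ->
  E1 <= E0 -> fh <= 2 * (eG + eV) + 3 * D'.
Proof. move=> /andP [? ?] *; lra. Qed.

Lemma sqrt_fin (fh eG eV u : R) : 0 <= eG -> 0 <= eV -> 0 <= u ->
  fh <= 2 * (eG + eV) + 3 * (256 * u) ->
  Num.sqrt fh <= 32 * (Num.sqrt eG + Num.sqrt eV + Num.sqrt u).
Proof.
move=> g0 v0 u0 H.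
have s1 := sqrtr_ge0 eG; have s2 := sqrtr_ge0 eV; have s3 := sqrtr_ge0 u.
have q1 := sqr_sqrtr g0; have q2 := sqr_sqrtr v0; have q3 := sqr_sqrtr u0.
have -> : 32 * (Num.sqrt eG + Num.sqrt eV + Num.sqrt u) =
          Num.sqrt ((32 * (Num.sqrt eG + Num.sqrt eV + Num.sqrt u)) ^+ 2).
  by rewrite sqrtr_sqr ger0_norm // mulr_ge0 // !addr_ge0.
rewrite ler_sqrt; last by apply: sqr_ge0.
apply: le_trans H _.
set a := Num.sqrt eG in s1 q1 *; set b := Num.sqrt eV in s2 q2 *; set c := Num.sqrt u in s3 q3 *.
rewrite -q1 -q2 -q3.
have : 0 <= a * b by apply: mulr_ge0.
have : 0 <= a * c by apply: mulr_ge0.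
have : 0 <= b * c by apply: mulr_ge0.
nra.
Qed.
End Helpers.

Section Ev.
Variables (R : realType) (S A : finType).
Variables (P : S -> A -> S -> R) (Rw : S -> A -> R) (mu : S -> A -> R) (gamma lam : R).
Hypothesis hP : is_kernel P.
Hypothesis hmu : is_dist_SA mu.

Lemma pS_sum1 : \sum_x pS P mu x = 1.
Proof.
case: hmu => _ h1; rewrite sum3 -h1; apply: eq_bigr => s _; apply: eq_bigr => a _.
by rewrite /pS /= -mulr_sumr; case: (hP s a) => _ ->; rewrite mulr1.
Qed.

Definition bad_ev n (th l : R) (V : valT R S) (pi g : polT R S A) (b : bool)
   (D : dataset S A n) : bool :=
  let mX := \sum_x pS P mu x * Xf Rw gamma lam V pi g x in
  let M2 := \sum_x pS P mu x * Xf Rw gamma lam V pi g x ^+ 2 in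
  let SX := \sum_i Xf Rw gamma lam V pi g (D i) in
  if b then n%:R * (th * mX + 2 * (th ^+ 2 * M2)) + l <= th * SX
  else n%:R * (- th * mX + 2 * (th ^+ 2 * M2)) + l <= - th * SX.

Lemma ev_bound n (W th l : R) (V : valT R S) (pi g : polT R S A) (b : bool) :
  0 <= th -> th * (8 * W ^+ 2) <= 1 / 2 ->
  (forall s, 0 <= V s <= W) -> (forall s a, 0 <= g s a <= 2 * W) ->
  (forall x, 0 <= yv Rw gamma lam pi V x <= 2 * W) ->
  \sum_(D : dataset S A n | bad_ev th l V pi g b D) data_prob P mu D <= expR (- l).
Proof.
move=> t0 tW hV hg hy.
have p0 := @pS_ge0 R S A P mu hP (fun s a => (hmu.1 s a)).
set Z := fun x => (if b then th else - th) * Xf Rw gamma lam V pi g x.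
have hZ : forall x, Z x <= 1 / 2.
  move=> x; apply: le_trans (ler_norm _) _; rewrite /Z normrM.
  have hx := Xabs x hV hg hy.
  have -> : `|(if b then th else - th)| = th by case: (b); rewrite ?normrN ger0_norm.
  by apply: le_trans tW; rewrite ler_wpM2l.
have := chernoff n p0 pS_sum1 l hZ.
have -> : \sum_x pS P mu x * Z x = (if b then th else - th) * \sum_x pS P mu x * Xf Rw gamma lam V pi g x.
  by rewrite mulr_sumr; apply: eq_bigr => x _; rewrite /Z; ring.
have -> : \sum_x pS P mu x * Z x ^+ 2 = th ^+ 2 * \sum_x pS P mu x * Xf Rw gamma lam V pi g x ^+ 2.
  rewrite mulr_sumr; apply: eq_bigr => x _; rewrite /Z exprMn.
  by case: (b); rewrite ?sqrrN; ring.
have E : forall D : dataset S A n, \sum_i Z (D i) = (if b then th else - th) * \sum_i Xf Rw gamma lam V pi g (D i).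
  by move=> D; rewrite mulr_sumr.
under eq_bigl do rewrite E.
apply: le_trans; rewrite le_eqVlt; apply/orP; left; apply/eqP.
by apply: eq_bigl => D; rewrite /bad_ev; case: (b).
Qed.
End Ev.

Local Close Scope classical_set_scope.
Unset Implicit Arguments.
Theorem theorem1 (R : realType) :
  exists c : R, 0 < c /\
  forall (S A : finType) (gamma : R) (P : S -> A -> S -> R) (Rw : S -> A -> R)
    (Rmax : R) (d0 : S -> R) (mu : S -> A -> R) (lam delta : R) (n : nat)
    (Vs : seq (valT R S)) (Ps : seq (polT R S A)) (Gs : seq (polT R S A))
    (pistar pistar_lam : polT R S A)
    (alg : dataset S A n -> valT R S * polT R S A),
  (0 < #|A|)%N ->
  0 <= gamma < 1 ->
  is_kernel P ->
  (forall s a, 0 <= Rw s a <= Rmax) ->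
  is_dist_S d0 ->
  is_dist_SA mu ->
  0 < lam ->
  0 < delta < 1 ->
  (0 < n)%N ->
  let Vmax := (Rmax + lam * ln (#|A|%:R)) / (1 - gamma) in
  (* finite function classes *)
  uniq Vs -> uniq Ps -> uniq Gs ->
  Vs != [::] -> Ps != [::] -> Gs != [::] ->
  (forall V, V \in Vs -> forall s, 0 <= V s <= Vmax) ->
  (forall pi, pi \in Ps -> is_policy pi /\
     forall s a, 0 < pi s a /\ `|ln (pi s a)| <= Vmax / lam) ->
  (forall g, g \in Gs -> forall s a, 0 <= g s a <= 2 * Vmax) ->
  (* pi* : deterministic maximizer of J; pi*_lambda : maximizer of J_lambda *)
  is_policy pistar -> is_deterministic pistar ->
  (forall pi, is_policy pi -> J P Rw d0 gamma pi <= J P Rw d0 gamma pistar) ->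
  is_policy pistar_lam ->
  (forall pi, is_policy pi ->
     J_lam P Rw d0 gamma lam pi <= J_lam P Rw d0 gamma lam pistar_lam) ->
  (* C_2 < infinity *)
  C2_finite P d0 gamma mu Ps pistar_lam ->
  (* alg D is an SBEED output computed from D *)
  (forall D, is_sbeed_output Rw gamma lam D Vs Ps Gs (alg D).1 (alg D).2) ->
  let iota := Vmax ^+ 2 *
      ln ((size Vs)%:R * (size Ps)%:R * (size Gs)%:R / delta) in
  let eG := eps_GVP P Rw mu gamma lam Vs Ps Gs in
  let eV := eps_VP P Rw mu gamma lam Vs Ps in
  let C := C2 P d0 gamma mu Ps pistar_lam in
  prob_event P mu (fun D : dataset S A n =>
     J P Rw d0 gamma pistar - J P Rw d0 gamma (alg D).2 <=
       lam * ln (#|A|%:R) / (1 - gamma)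
       + c * Num.sqrt C / (1 - gamma) *
           (Num.sqrt eG + Num.sqrt eV
            + Num.sqrt (Num.sqrt (iota / n%:R * (eG + eV)))
            + Num.sqrt (iota / n%:R)))
  >= 1 - delta.
Proof.
exists 64; split; first by [].
move=> S A gamma P Rw Rmax d0 mu lam delta n Vs Ps Gs pistar pistar_lam alg
  hA hg hP hRw hd0 hmu hlam hdelta hn Vmax hVu hPu hGu hVn hPn hGn hV hPi hG
  hps hdet hJmax hpsl hJlmax hC2 halg.
cbv zeta.
set iota := Vmax ^+ 2 * _.
set eG := eps_GVP _ _ _ _ _ _ _ _.
set eV := eps_VP _ _ _ _ _ _ _.
set C := C2 _ _ _ _ _ _.
have mu0 : forall s a, 0 <= mu s a by case: hmu.
have [g0 g1] := andP hg.
have g1' : 0 < 1 - gamma by rewrite subr_gt0.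
have [dl0 dl1] := andP hdelta.
have [a0 _] := card_gt0P hA.
have [s0 _] : exists s0 : S, true.
  case: (pickP (@predT S)) => [s0 _|H]; first by exists s0.
  case: hd0 => _; rewrite big_pred0 //; by move/eqP; rewrite eq_sym oner_eq0.
have lnA0 : 0 <= ln (#|A|%:R : R) by apply: ln_ge0; rewrite ler1n.
have Rmax0 : 0 <= Rmax by case/andP: (hRw s0 a0) => h1 h2; apply: le_trans h2.
have hW : Vmax * (1 - gamma) = Rmax + lam * ln (#|A|%:R) by rewrite /Vmax divfK ?gt_eqF.
have lk0 : 0 <= lam * ln (#|A|%:R : R) by apply: mulr_ge0 => //; exact: ltW.
have W0 : 0 <= Vmax.
  by rewrite /Vmax; apply: divr_ge0; [exact: addr_ge0 | exact: ltW].
have ybound : forall (V : valT R S) (pi : polT R S A), V \in Vs -> pi \in Ps ->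
    forall x, 0 <= yv Rw gamma lam pi V x <= 2 * Vmax.
  move=> V pi hVi hpi [[s a] s']; rewrite /yv /=.
  have [hpol hpos] := hPi pi hpi.
  have [pp hl] := hpos s a.
  have lnle : ln (pi s a) <= 0 by apply: ln_le0; apply: pol_le1.
  have hl' : lam * (- ln (pi s a)) <= Vmax.
    rewrite -ler0_norm // -(@ler_pM2l _ lam^-1) ?invr_gt0 // mulrA mulVf ?gt_eqF // mul1r.
    by rewrite mulrC.
  have [v0 v1] := andP (hV V hVi s').
  have [r0 r1] := andP (hRw s a).
  have gv0 : 0 <= gamma * V s' by apply: mulr_ge0.
  have gv1 : gamma * V s' <= gamma * Vmax by apply: ler_wpM2l.
  have ln0 : 0 <= lam * (- ln (pi s a)) by apply: mulr_ge0; [exact: ltW | rewrite oppr_ge0].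
  apply/andP; split; first by lra.
  have : Rmax <= Vmax * (1 - gamma) by rewrite hW lerDl.
  lra.
set pairs := [seq (V, p) | V <- Vs, p <- Ps].
have [V1 V1in] : exists V1, V1 \in Vs.
  by move: hVn; case: (Vs) => [//|V1 ?] _; exists V1; rewrite mem_head.
have [p1 p1in] : exists p1, p1 \in Ps.
  by move: hPn; case: (Ps) => [//|p1 ?] _; exists p1; rewrite mem_head.
have pairsn : pairs != [::].
  have : (V1, p1) \in pairs by apply: allpairs_f.
  by case: (pairs).
have [vp0 vp0in eVE] := minl_att (V0 R S, pol0 R S A)
  (fun vp : valT R S * polT R S A => sqnorm mu (fun s a => vp.1 s - cons_op P Rw gamma lam vp.2 vp.1 s a)) pairsn.
have {}eVE : eV = fres P Rw mu gamma lam vp0.1 vp0.2 by rewrite /eV /eps_VP eVE.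
have eV0 : 0 <= eV by rewrite eVE; apply: (fres_ge0 P Rw gamma lam mu0).
have gsP : forall vp : valT R S * polT R S A, {g | g \in Gs /\
    minl (pol0 R S A) Gs (fun g => sqnorm mu (fun s a => g s a - cons_op P Rw gamma lam vp.2 vp.1 s a))
    = hres P Rw mu gamma lam vp.1 vp.2 g}.
  move=> vp; apply: cid.
  by have [g hg1 hg2] := minl_att (pol0 R S A)
    (fun g : polT R S A => sqnorm mu (fun s a => g s a - cons_op P Rw gamma lam vp.2 vp.1 s a)) hGn; exists g.
pose gs vp := sval (gsP vp).
have [vpG vpGin eGE] := maxl_att (V0 R S, pol0 R S A)
  (fun vp : valT R S * polT R S A => minl (pol0 R S A) Gs
     (fun g => sqnorm mu (fun s a => g s a - cons_op P Rw gamma lam vp.2 vp.1 s a))) pairsn.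
have {}eGE : eG = minl (pol0 R S A) Gs
     (fun g => sqnorm mu (fun s a => g s a - cons_op P Rw gamma lam vpG.2 vpG.1 s a)).
  by rewrite /eG /eps_GVP eGE.
have eG0 : 0 <= eG.
  by rewrite eGE; case: (svalP (gsP vpG)) => _ ->; apply: (hres_ge0 P Rw gamma lam mu0).
have hsle : forall vp, vp \in pairs -> hres P Rw mu gamma lam vp.1 vp.2 (gs vp) <= eG.
  move=> vp hvp; case: (svalP (gsP vp)) => _ <-.
  rewrite /eG /eps_GVP.
  exact: (maxl_ge (V0 R S, pol0 R S A)
    (fun vp : valT R S * polT R S A => minl (pol0 R S A) Gs
     (fun g => sqnorm mu (fun s a => g s a - cons_op P Rw gamma lam vp.2 vp.1 s a))) hvp).
have k1 : 1 <= ((size Vs)%:R * (size Ps)%:R * (size Gs)%:R : R).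
  by rewrite -!natrM ler1n !muln_gt0 !lt0n !size_eq0 hVn hPn hGn.
have ell0 : 0 <= ln ((size Vs)%:R * (size Ps)%:R * (size Gs)%:R / delta).
  apply: ln_ge0; rewrite ler_pdivlMr // mul1r; apply: le_trans k1; exact: ltW.
have u0 : 0 <= iota / n%:R.
  by apply: divr_ge0; [apply: mulr_ge0 => //; apply: sqr_ge0 | apply: ler0n].
have keyA : forall D : dataset S A n,
  fres P Rw mu gamma lam (alg D).1 (alg D).2 <= 2 * (eG + eV) + 3 * (256 * (iota / n%:R)) ->
  J P Rw d0 gamma pistar - J P Rw d0 gamma (alg D).2 <=
       lam * ln (#|A|%:R) / (1 - gamma)
       + 64 * Num.sqrt C / (1 - gamma) *
           (Num.sqrt eG + Num.sqrt eV
            + Num.sqrt (Num.sqrt (iota / n%:R * (eG + eV)))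
            + Num.sqrt (iota / n%:R)).
  move=> D hf.
  case: (halg D) => hVD hPD _.
  have [hpiD hposD] := hPi _ hPD.
  have Cl : conc_term P d0 gamma mu pistar_lam <= C.
    by rewrite /C /C2; apply: maxl_ge; rewrite mem_head.
  have Ch : conc_term P d0 gamma mu (alg D).2 <= C.
    by rewrite /C /C2; apply: maxl_ge; rewrite inE hPD orbT.
  have sup1 := hC2 _ (mem_head _ _).
  have sup2 := hC2 (alg D).2 (ltac:(by rewrite inE hPD orbT)).
  have := det_bound hP hd0 hg (alg D).1 hps hpsl hpiD (fun s a => (hposD s a).1) hlam hA
     (hJlmax _ hps) mu0 sup1 sup2 Cl Ch.
  have sq := sqrt_fin eG0 eV0 u0 hf.
  rewrite /fres in sq.
  set sf := Num.sqrt (sqnorm mu _) in sq *.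
  set K := Num.sqrt C / (1 - gamma).
  have K0 : 0 <= K by apply: divr_ge0; [exact: sqrtr_ge0 | exact: ltW].
  have -> : 2 * Num.sqrt C / (1 - gamma) = 2 * K by rewrite /K mulrA.
  have -> : 64 * Num.sqrt C / (1 - gamma) = 64 * K by rewrite /K mulrA.
  set Y := Num.sqrt eG + Num.sqrt eV + Num.sqrt (iota / n%:R) in sq.
  have hY : Y <= Num.sqrt eG + Num.sqrt eV + Num.sqrt (Num.sqrt (iota / n%:R * (eG + eV)))
            + Num.sqrt (iota / n%:R).
    by rewrite /Y lerD2r lerDl sqrtr_ge0.
  have h1 : K * sf <= K * (32 * Y) by apply: ler_wpM2l.
  have h2 : K * Y <= K * (Num.sqrt eG + Num.sqrt eV + Num.sqrt (Num.sqrt (iota / n%:R * (eG + eV)))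
            + Num.sqrt (iota / n%:R)) by apply: ler_wpM2l.
  move=> H; nra.
have pS0 := @pS_ge0 R S A P mu hP mu0.
have pS1 := @pS_sum1 R S A P mu hP hmu.
have probE : forall E : dataset S A n -> Prop,
  prob_event P mu E = \sum_(D : dataset S A n | `[< E D >]) dprob (pS P mu) D.
  by [].
rewrite probE.
have [Wz|Wp] : Vmax = 0 \/ 0 < Vmax.
  by move: W0; rewrite le_eqVlt => /orP [/eqP <-|]; [left|right].
-
  have Rmz : Rmax = 0.
    have : Rmax + lam * ln (#|A|%:R) = 0 by rewrite -hW Wz mul0r.
    lra.
  have fz : forall D, fres P Rw mu gamma lam (alg D).1 (alg D).2 = 0.
    move=> D; case: (halg D) => hVD hPD _.
    have [hpiD hposD] := hPi _ hPD.
    have Vz : forall s, (alg D).1 s = 0.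
      by move=> s; have := hV _ hVD s; rewrite Wz => h; apply/eqP; rewrite eq_le andbC.
    have lz : forall s a, ln ((alg D).2 s a) = 0.
      move=> s a; have := (hposD s a).2; rewrite Wz mul0r => h.
      by apply/eqP; rewrite -normr_le0.
    have Rz : forall s a, Rw s a = 0.
      by move=> s a; have := hRw s a; rewrite Rmz => h; apply/eqP; rewrite eq_le andbC.
    apply: big1 => s _; apply: big1 => a _.
    rewrite /cons_op /PV Vz Rz lz big1 ?mulr0 ?subrr; last by move=> s' _; rewrite Vz mulr0.
    by rewrite !(mulr0, addr0, subr0, sub0r, oppr0) expr0n /= mulr0.
  have := @union_bound R _ (pS P mu) n pS0 pS1 bool (fun _ _ => true) [::]
    (fun D => `[< J P Rw d0 gamma pistar - J P Rw d0 gamma (alg D).2 <=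
       lam * ln (#|A|%:R) / (1 - gamma)
       + 64 * Num.sqrt C / (1 - gamma) *
           (Num.sqrt eG + Num.sqrt eV
            + Num.sqrt (Num.sqrt (iota / n%:R * (eG + eV)))
            + Num.sqrt (iota / n%:R)) >]) 0.
  rewrite /= mulr0 subr0 => H.
  apply: le_trans (H _ _); last by [].
  - lra.
  move=> D; rewrite asboolT //; apply: keyA; rewrite fz.
  lra.
set th := (256 * Vmax ^+ 2)^-1.
set kk := (size Vs)%:R * (size Ps)%:R * (size Gs)%:R : R.
set ell := ln (kk / delta).
have W2 : 0 < Vmax ^+ 2 by rewrite exprn_gt0.
have th0 : 0 < th by rewrite invr_gt0 mulr_gt0.
have th8 : th * (8 * Vmax ^+ 2) <= 1 / 2.
  have -> : th * (8 * Vmax ^+ 2) = 1 / 32 by rewrite /th; field; rewrite gt_eqF.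
  lra.
have kk0 : 0 < kk by apply: lt_le_trans k1.
have hvp0 : vp0.1 \in Vs /\ vp0.2 \in Ps.
  by case/allpairsP: vp0in => [[x y] [hx hy ->]].
have memP : forall vp, vp \in pairs -> vp.1 \in Vs /\ vp.2 \in Ps.
  by move=> vp /allpairsP [[x y] [hx hy ->]].
have gsin : forall vp, gs vp \in Gs by move=> vp; case: (svalP (gsP vp)).
pose ev := fun (i : bool * (valT R S * polT R S A * polT R S A)) (D : dataset S A n) =>
  bad_ev P Rw mu gamma lam th ell i.2.1.1 i.2.1.2 i.2.2 i.1 D.
pose idx := [seq (true, (vp0.1, vp0.2, g)) | g <- Gs] ++
            [seq (false, (vp.1, vp.2, gs vp)) | vp <- [seq vp <- pairs | vp != vp0]].
have upairs : uniq pairs.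
  by apply: allpairs_uniq => // -[? ?] [? ?] _ _.
have hsize : ((size idx)%:R : R) <= kk.
  rewrite size_cat !size_map size_filter /kk -!natrM ler_nat.
  have := count_predC (pred1 vp0) pairs.
  rewrite (count_uniq_mem _ upairs) vp0in size_allpairs => hc.
  have : (0 < size Vs)%N by rewrite lt0n size_eq0.
  have : (0 < size Ps)%N by rewrite lt0n size_eq0.
  have : (0 < size Gs)%N by rewrite lt0n size_eq0.
  change (count (predC (pred1 vp0)) pairs) with (count (fun vp => vp != vp0) pairs) in hc.
  move: hc; set c := count _ _; move=> hc hG0 _ _.
  by rewrite -hc mulnDl mul1n leq_add2l leq_pmulr.
have expE : expR (- ell) = delta / kk.
  by rewrite expRN /ell lnK ?posrE ?divr_gt0 // invf_div.
have := @union_bound R _ (pS P mu) n pS0 pS1 _ ev idx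
    (fun D => `[< J P Rw d0 gamma pistar - J P Rw d0 gamma (alg D).2 <=
       lam * ln (#|A|%:R) / (1 - gamma)
       + 64 * Num.sqrt C / (1 - gamma) *
           (Num.sqrt eG + Num.sqrt eV
            + Num.sqrt (Num.sqrt (iota / n%:R * (eG + eV)))
            + Num.sqrt (iota / n%:R)) >]) (delta / kk).
move=> UB; apply: (le_trans _ (UB _ _)).
  have : (size idx)%:R * (delta / kk) <= delta.
    by rewrite mulrA ler_pdivrMr // mulrC ler_wpM2l // ltW.
  lra.
-
  move=> D hE.
  case Hh: (has (ev^~ D) idx) => //.
  exfalso; move/negP: hE; apply; apply/asboolP; apply: keyA.
  have Hn : {in idx, forall i, ~~ ev i D} by apply/hasPn; rewrite Hh.
  case: (halg D) => hVD hPD hmin.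
  set Vh := (alg D).1 in hVD hmin *; set ph := (alg D).2 in hPD hmin *.
  have vhin : (Vh, ph) \in pairs by apply: allpairs_f.
  have [e|ne] := eqVneq (Vh, ph) vp0.
    have -> : fres P Rw mu gamma lam Vh ph = eV by rewrite eVE -e.
    lra.
  set vh := (Vh, ph) in vhin ne.
  set gh := gs vh.
  have nn0 : 0 < (n%:R : R) by rewrite ltr0n.
  have memlo : (false, (Vh, ph, gh)) \in idx.
    rewrite mem_cat; apply/orP; right; apply/mapP; exists vh => //.
    by rewrite mem_filter ne vhin.
  have Hlo := Hn _ memlo; rewrite /ev /bad_ev /= in Hlo.
  have B1 := @mom2 R S A P Rw mu gamma lam hP mu0 Vmax Vh ph gh (hV _ hVD) (hG _ (gsin vh))
    (ybound _ _ hVD hPD).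
  have L := conv_lo nn0 th0 Hlo B1.
  rewrite (@mean_eq R S A P Rw mu gamma lam hP) in L.
  have [h01 h02] := hvp0.
  have [gg1 gg1in obj0E] := maxl_att (pol0 R S A)
    (fun g => loss_L Rw gamma lam D vp0.1 vp0.2 - loss_R Rw gamma lam D g vp0.1 vp0.2) hGn.
  have memup : (true, (vp0.1, vp0.2, gg1)) \in idx.
    by rewrite mem_cat; apply/orP; left; apply/mapP; exists gg1.
  have Hup := Hn _ memup; rewrite /ev /bad_ev /= in Hup.
  have B2 := @mom2 R S A P Rw mu gamma lam hP mu0 Vmax vp0.1 vp0.2 gg1 (hV _ h01) (hG _ gg1in)
    (ybound _ _ h01 h02).
  have U := conv_up nn0 th0 Hup B2.
  rewrite (@mean_eq R S A P Rw mu gamma lam hP) in U.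
  have o1 : (\sum_i Xf Rw gamma lam Vh ph gh (D i)) / n%:R <= sbeed_obj Rw gamma lam D Gs Vh ph.
    rewrite /sbeed_obj.
    have := maxl_ge (pol0 R S A)
      (fun g => loss_L Rw gamma lam D Vh ph - loss_R Rw gamma lam D g Vh ph) (gsin vh).
    by rewrite /= emp_eq mulrC.
  have o2 := hmin _ _ h01 h02.
  have o3 : sbeed_obj Rw gamma lam D Gs vp0.1 vp0.2 =
            (\sum_i Xf Rw gamma lam vp0.1 vp0.2 gg1 (D i)) / n%:R.
    by rewrite /sbeed_obj obj0E emp_eq mulrC.
  have t1 : forall z, 2 * th * (32 * Vmax ^+ 2 * z) = z / 4.
    by move=> z; rewrite /th; field; rewrite gt_eqF.
  have t2 : ell / (n%:R * th) = 256 * (iota / n%:R).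
    by rewrite /th /iota /ell; field; rewrite !gt_eqF.
  rewrite t1 t2 in L; rewrite t1 t2 in U.
  rewrite -eVE in U.
  apply: (stat_core _ _ _ _ L U).
  + by rewrite (hres_ge0 P Rw gamma lam mu0) hsle.
  + exact: (hres_ge0 P Rw gamma lam mu0).
  + exact: eV0.
  + by apply: mulr_ge0.
  + by rewrite -o3; apply: le_trans o2.
-
  move=> i; rewrite mem_cat -expE => /orP [] /mapP [x hx ->].
  + have [h1 h2] := hvp0.
    exact: (@ev_bound R S A P Rw mu gamma lam hP hmu n Vmax th ell vp0.1 vp0.2 x true
      (ltW th0) th8 (hV _ h1) (hG _ hx) (ybound _ _ h1 h2)).
  + rewrite mem_filter in hx; case/andP: hx => _ hx.
    have [h1 h2] := memP _ hx.
    exact: (@ev_bound R S A P Rw mu gamma lam hP hmu n Vmax th ell x.1 x.2 (gs x) false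
      (ltW th0) th8 (hV _ h1) (hG _ (gsin x)) (ybound _ _ h1 h2)).
Qed.
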